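(* Let $n\ge 1$, $\rho>0$, $\tau>0$, and let $A\in\mathbb{R}^{n\times n}$ be symmetric positive semidefinite with eigendecomposition $A=U\Sigma U^T$, where $U\in\mathbb{R}^{n\times n}$ is orthogonal and $\Sigma=\operatorname{diag}(\sigma_1,\dots,\sigma_n)$ with $\sigma_i\ge 0$. For each $i$ let $g_i(\gamma)=\frac{\rho}{2}(\sigma_i-\gamma^2)^2+\tau\gamma$ and let $\gamma_i^*\in\arg\min_{\gamma\ge 0} g_i(\gamma)$. Then: (i) each $\gamma_i^*$ belongs to the set $\{\alpha\in\mathbb{R}_{\ge 0} : p_{\sigma_i,\tau/(2\rho)}(\alpha)=0\}\cup\{0\}$, where $p_{a,b}(x)=x^3-ax+b$; (ii) $$\min_{L\in\mathbb{R}^{n\times n}} \frac{\rho}{2}\|A-L^TL\|_F^2+\tau\|L\|_* \;=\; \sum_{i=1}^n\Big(\frac{\rho}{2}(\sigma_i-\gamma_i^{*2})^2+\tau\gamma_i^*\Big);$$ (iii) this minimum is attained at $L^*=\Gamma^*U^T$, where $\Gamma^*=\operatorname{diag}(\gamma_1^*,\dots,\gamma_n^* )$ is a diagonal matrix with nonnegative entries.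
   Context: $\|M\|_F$ denotes the Frobenius norm and $\|M\|_*$ the nuclear (trace) norm of $M$, i.e. the sum of its singular values. *)

(* Defs.v *)
(* real numbers are modelled by an arbitrary real closed field R. *)
From HB Require Import structures.
From mathcomp Require Import all_boot all_order all_algebra.
Set Implicit Arguments. Unset Strict Implicit. Unset Printing Implicit Defensive.
Import Order.TTheory GRing.Theory Num.Theory.
Local Open Scope ring_scope.

Section Defs.
Variable R : rcfType.

Definition orthogonal_mx n (U : 'M[R]_n) : Prop := U^T *m U = 1%:M /\ U *m U^T = 1%:M.

Definition frob_sq n (M : 'M[R]_n) : R := \sum_(i < n) \sum_(j < n) (M i j) ^+ 2.

Definition svd_of n (L : 'M[R]_n) (U : 'M[R]_n) (s : 'I_n -> R) (V : 'M[R]_n) : Prop :=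
  [/\ orthogonal_mx U, orthogonal_mx V, (forall i, 0 <= s i)
    & L = U *m diag_mx (\row_i s i) *m V^T].

Definition is_nuclear_norm n (L : 'M[R]_n) (t : R) : Prop :=
  exists U s V, svd_of L U s V /\ t = \sum_(i < n) s i.

Definition p_ab (a b x : R) : R := x ^+ 3 - a * x + b.

Definition g_fun (rho tau sigma gamma : R) : R :=
  rho / 2 * (sigma - gamma ^+ 2) ^+ 2 + tau * gamma.

(* objective rho/2 ||A - L^T L||_F^2 + tau * t  (t = ||L||_* ) *)
Definition objective n (rho tau : R) (A L : 'M[R]_n) (t : R) : R :=
  rho / 2 * frob_sq (A - L^T *m L) + tau * t.

End Defs.

(* Main.v *)
Require Import Defs.
From HB Require Import structures.
From mathcomp Require Import all_boot all_order all_algebra.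
From mathcomp Require Import ring lra.
Import Order.TTheory GRing.Theory Num.Theory.
Local Open Scope ring_scope.

Section L.
Variable R : rcfType.

Lemma frob_tr n (X : 'M[R]_n) : frob_sq X = \tr (X *m X^T).
Proof.
rewrite /frob_sq /mxtrace; apply eq_bigr => i _; rewrite mxE.
by apply eq_bigr => j _; rewrite mxE expr2.
Qed.

Lemma frob_conj n (U X : 'M[R]_n) : U^T *m U = 1%:M ->
  frob_sq (U *m X *m U^T) = frob_sq X.
Proof.
move=> hU; rewrite !frob_tr !trmx_mul trmxK.
rewrite -!mulmxA (mulmxA U^T U) hU mul1mx mxtrace_mulC -!mulmxA hU mulmx1.
by [].
Qed.

Lemma key n (M : 'M[R]_n) (hM : orthogonal_mx M) (sg d : 'I_n -> R) :
 frob_sq (diag_mx (\row_i sg i) - M *m diag_mx (\row_j d j) *m M^T)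
 = \sum_i \sum_j (M i j)^+2 * (sg i - d j)^+2.
Proof.
case: hM => h1 h2.
set S := diag_mx _; set D := diag_mx _; set B := M *m D *m M^T.
have BT : B^T = B by rewrite /B !trmx_mul trmxK tr_diag_mx mulmxA.
rewrite frob_tr linearB /= tr_diag_mx BT.
rewrite mulmxBl !mulmxBr !linearB /=.
rewrite (mxtrace_mulC B S).
have e1 : \tr (S *m S) = \sum_i sg i ^+ 2.
  by rewrite mulmx_diag mxtrace_diag; apply eq_bigr => i _; rewrite !mxE expr2.
have e3 : \tr (S *m B) = \sum_i \sum_j (M i j)^+2 * (sg i * d j).
  rewrite /mxtrace; apply eq_bigr => i _; rewrite mul_diag_mx !mxE mulr_sumr.
  apply eq_bigr => j _; rewrite /B mul_mx_diag !mxE; ring.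
have e4 : \tr (B *m B) = \sum_j d j ^+ 2.
  have -> : B *m B = M *m (D *m D *m M^T).
    by rewrite /B -!mulmxA (mulmxA M^T M) h1 mul1mx.
  rewrite mxtrace_mulC -!mulmxA h1 mulmx1 mulmx_diag mxtrace_diag.
  by apply eq_bigr => i _; rewrite !mxE expr2.
have row i : \sum_j (M i j)^+2 = 1.
  have := congr1 (fun X : 'M[R]_n => X i i) h2; rewrite !mxE eqxx /= mulr1n => <-.
  by apply eq_bigr => j _; rewrite !mxE expr2.
have col j : \sum_i (M i j)^+2 = 1.
  have := congr1 (fun X : 'M[R]_n => X j j) h1; rewrite !mxE eqxx /= mulr1n => <-.
  by apply eq_bigr => i _; rewrite !mxE expr2.
rewrite e1 e3 e4.
have e5 : \sum_i \sum_j (M i j)^+2 * d j ^+ 2 = \sum_j d j ^+ 2.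
  rewrite exchange_big /=; apply eq_bigr => j _.
  by rewrite -mulr_suml col mul1r.
have e6 : \sum_i \sum_j (M i j)^+2 * sg i ^+ 2 = \sum_i sg i ^+ 2.
  by apply eq_bigr => i _; rewrite -mulr_suml row mul1r.
rewrite -e5 -e6.
have -> : \sum_i \sum_j (M i j)^+2 * (sg i - d j)^+2 =
  \sum_i \sum_j (M i j)^+2 * sg i ^+ 2 - 2 * \sum_i \sum_j (M i j)^+2 * (sg i * d j)
  + \sum_i \sum_j (M i j)^+2 * d j ^+ 2.
  rewrite mulr_sumr -sumrB -big_split /=; apply eq_bigr => i _.
  rewrite !mulr_sumr -sumrB -big_split /=; apply eq_bigr => j _; ring.
ring.
Qed.

Lemma obj_eq n (rho tau : R) (A U : 'M[R]_n) (sg : 'I_n -> R) (hU : orthogonal_mx U)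
  (hA : A = U *m diag_mx (\row_i sg i) *m U^T)
  (L P V : 'M[R]_n) (s : 'I_n -> R) (hs : svd_of L P s V) :
  objective rho tau A L (\sum_i s i) =
  \sum_i \sum_j ((U^T *m V) i j)^+2 * g_fun rho tau (sg i) (s j).
Proof.
case: hs => [[hP1 hP2] [hV1 hV2] s0 ->].
case: hU => [hU1 hU2].
set M := U^T *m V.
have hM : orthogonal_mx M.
  split; rewrite /M trmx_mul trmxK.
    by rewrite -mulmxA (mulmxA U) hU2 mul1mx hV1.
  by rewrite -mulmxA (mulmxA V) hV2 mul1mx hU1.
set d := fun j => s j ^+ 2.
have hL : (P *m diag_mx (\row_i s i) *m V^T)^T *m (P *m diag_mx (\row_i s i) *m V^T)
   = U *m (M *m diag_mx (\row_j d j) *m M^T) *m U^T.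
  rewrite /M !trmx_mul !trmxK tr_diag_mx.
  rewrite -!mulmxA (mulmxA U) hU2 mul1mx (mulmxA P^T) hP1 mul1mx.
  rewrite mulmx1 !mulmxA; congr (_ *m _); rewrite -mulmxA.
  rewrite mulmx_diag; congr (_ *m _); congr diag_mx.
  by apply/rowP => j; rewrite !mxE /d expr2.
rewrite /objective hL hA -mulmxBl -mulmxBr frob_conj // key //.
have -> : \sum_i s i = \sum_i \sum_j (M i j)^+2 * s j.
  rewrite exchange_big /=; apply eq_bigr => j _.
  rewrite -mulr_suml.
  have := congr1 (fun X : 'M[R]_n => X j j) hM.1; rewrite !mxE eqxx /= mulr1n => E.
  rewrite -[LHS]mul1r -E; congr (_ * _); apply eq_bigr => i _; rewrite !mxE expr2.
  by [].
rewrite !mulr_sumr -big_split /=; apply eq_bigr => i _.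
rewrite !mulr_sumr -big_split /=; apply eq_bigr => j _.
rewrite /g_fun /d; ring.
Qed.

Lemma crit (rho tau sg gm : R) (hr : 0 < rho) (hgm : 0 < gm)
  (hmin : forall c, 0 <= c -> g_fun rho tau sg gm <= g_fun rho tau sg c) :
  p_ab sg (tau / (2 * rho)) gm = 0.
Proof.
set Dv := 2 * rho * (gm ^+ 3 - sg * gm) + tau.
have hp : p_ab sg (tau / (2 * rho)) gm * (2 * rho) = Dv.
  have h2 : 0 < 2 * rho by lra.
  rewrite /p_ab /Dv mulrDl divfK; first ring.
  by rewrite (gt_eqF h2).
set Mb := rho / 2 * (9 * gm ^+ 2 + 2 * `|sg - gm ^+ 2|) + 1.
have Mb0 : 0 < Mb.
  have := normr_ge0 (sg - gm ^+ 2); rewrite /Mb => h.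
  have : 0 <= rho / 2 * (9 * gm ^+ 2 + 2 * `|sg - gm ^+ 2|).
    apply: mulr_ge0; first lra.
    have : 0 <= gm ^+ 2 by apply: sqr_ge0.
    lra.
  lra.
have diff e : g_fun rho tau sg (gm + e) - g_fun rho tau sg gm =
   e * Dv + e ^+ 2 * (rho / 2 * ((2 * gm + e) ^+ 2 - 2 * (sg - gm ^+ 2))).
  by rewrite /g_fun /Dv; field.
have Kb e : - gm <= e -> e <= gm ->
   rho / 2 * ((2 * gm + e) ^+ 2 - 2 * (sg - gm ^+ 2)) <= Mb.
  move=> h1 h2.
  have n1 := ler_norm (- (sg - gm ^+ 2)); rewrite normrN in n1.
  have s1 : (2 * gm + e) ^+ 2 <= 9 * gm ^+ 2 by nra.
  rewrite /Mb.
  have : rho / 2 * ((2 * gm + e) ^+ 2 - 2 * (sg - gm ^+ 2)) <=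
     rho / 2 * (9 * gm ^+ 2 + 2 * `|sg - gm ^+ 2|).
    apply: ler_wpM2l; first lra.
    lra.
  lra.
have hD : Dv = 0.
  have Mb2 : 0 < 2 * Mb by lra.
  case: (ltrgtP Dv 0) => // hD; exfalso.
  - set a := Num.min gm (- Dv / (2 * Mb)).
    have a0 : 0 < a by rewrite lt_min hgm /=; apply: divr_gt0; lra.
    have a1 : a <= gm by rewrite ge_min lexx.
    have a2 : a <= - Dv / (2 * Mb) by rewrite ge_min lexx orbT.
    have a3 : a * (2 * Mb) <= - Dv.
      by have := ler_wpM2r (ltW Mb2) a2; rewrite divfK // (gt_eqF Mb2).
    have h1 := hmin (gm + a) ltac:(lra).
    have h2 := diff a.
    have h3 := Kb a ltac:(lra) ltac:(lra).
    have h4 : a ^+ 2 * (rho / 2 * ((2 * gm + a) ^+ 2 - 2 * (sg - gm ^+ 2))) <= a ^+ 2 * Mb.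
      by apply: ler_wpM2l => //; apply: sqr_ge0.
    have h5 : a * (a * (2 * Mb)) <= a * (- Dv) by apply: ler_wpM2l => //; exact: ltW.
    nra.
  - set a := Num.min gm (Dv / (2 * Mb)).
    have a0 : 0 < a by rewrite lt_min hgm /=; apply: divr_gt0; lra.
    have a1 : a <= gm by rewrite ge_min lexx.
    have a2 : a <= Dv / (2 * Mb) by rewrite ge_min lexx orbT.
    have a3 : a * (2 * Mb) <= Dv.
      by have := ler_wpM2r (ltW Mb2) a2; rewrite divfK // (gt_eqF Mb2).
    have h1 := hmin (gm + - a) ltac:(lra).
    have h2 := diff (- a).
    have h3 := Kb (- a) ltac:(lra) ltac:(lra).
    have h4 : (- a) ^+ 2 * (rho / 2 * ((2 * gm + - a) ^+ 2 - 2 * (sg - gm ^+ 2))) <= (- a) ^+ 2 * Mb.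
      by apply: ler_wpM2l => //; apply: sqr_ge0.
    have h5 : a * (a * (2 * Mb)) <= a * Dv by apply: ler_wpM2l => //; exact: ltW.
    rewrite sqrrN in h4 h2; nra.
move: hp; rewrite hD => /eqP; rewrite mulf_eq0 => /orP [/eqP // | ].
move=> /eqP; lra.
Qed.


Lemma row_sum n (M : 'M[R]_n) : orthogonal_mx M -> forall i, \sum_j (M i j)^+2 = 1.
Proof.
case=> _ h2 i.
have := congr1 (fun X : 'M[R]_n => X i i) h2; rewrite !mxE eqxx /= mulr1n => <-.
by apply eq_bigr => j _; rewrite !mxE expr2.
Qed.
End L.

Theorem theorem3p1 (R : rcfType) (n : nat) (hn : (0 < n)%N) (rho tau : R)
  (hrho : 0 < rho) (htau : 0 < tau) (A U : 'M[R]_n) (sigma : 'I_n -> R)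
  (hsym : A^T = A) (hU : orthogonal_mx U) (hsig : forall i, 0 <= sigma i)
  (hA : A = U *m diag_mx (\row_i sigma i) *m U^T)
  (gamma : 'I_n -> R) (hg0 : forall i, 0 <= gamma i)
  (hgmin : forall i (c : R), 0 <= c -> g_fun rho tau (sigma i) (gamma i) <= g_fun rho tau (sigma i) c) :
  (* (i) *)
  (forall i, (0 <= gamma i /\ p_ab (sigma i) (tau / (2 * rho)) (gamma i) = 0) \/ gamma i = 0)
  (* (ii) lower bound: every L (with t = ||L||_* ) has objective >= the sum *)
  /\ (forall (L : 'M[R]_n) (t : R), is_nuclear_norm L t ->
        \sum_(i < n) g_fun rho tau (sigma i) (gamma i) <= objective rho tau A L t)
  (* (ii)+(iii) the value is attained at L* = Gamma* U^T *)
  /\ (exists t, is_nuclear_norm (diag_mx (\row_i gamma i) *m U^T) t /\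
        objective rho tau A (diag_mx (\row_i gamma i) *m U^T) t
        = \sum_(i < n) g_fun rho tau (sigma i) (gamma i)).
Proof.
split.
  move=> i; have [->|nz] := eqVneq (gamma i) 0; first by right.
  left; split => //; apply: crit => //.
    by rewrite lt_neqAle eq_sym nz hg0.
  exact: hgmin.
split.
  move=> L t [P [s [V [hs ->]]]].
  rewrite (@obj_eq R n rho tau A U sigma hU hA _ _ _ _ hs).
  have hM : orthogonal_mx (U^T *m V).
    case: hU => hU1 hU2; case: hs => _ [hV1 hV2] _ _.
    split; rewrite trmx_mul trmxK.
      by rewrite -mulmxA (mulmxA U) hU2 mul1mx hV1.
    by rewrite -mulmxA (mulmxA V) hV2 mul1mx hU1.
  apply: ler_sum => i _.
  have -> : g_fun rho tau (sigma i) (gamma i) =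
     \sum_j ((U^T *m V) i j)^+2 * g_fun rho tau (sigma i) (gamma i).
    by rewrite -mulr_suml row_sum // mul1r.
  apply: ler_sum => j _; apply: ler_wpM2l; first exact: sqr_ge0.
  apply: hgmin; case: hs => _ _ h _; exact: h.
exists (\sum_i gamma i).
have hs : svd_of (diag_mx (\row_i gamma i) *m U^T) 1%:M gamma U.
  split => //.
  - by split; rewrite trmx1 mul1mx.
  - by rewrite mul1mx.
split; first by exists 1%:M, gamma, U.
rewrite (@obj_eq R n rho tau A U sigma hU hA _ _ _ _ hs) hU.1.
apply: eq_bigr => i _.
rewrite (bigD1 i) //= big1 ?addr0.
  by rewrite mxE eqxx /= mulr1n expr1n mul1r.
by move=> j /negPf ji; rewrite mxE eq_sym ji /= mulr0n expr0n /= mul0r.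
Qed.
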